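(* Let $k\ge 8$ and $H\in\mathcal{H}(k)$. If $C$ is a cycle in $H$ of odd weight that is not spanning (i.e. $V(C)\ne V(H)$), then $|N^1[C]|\ge\frac{2k+1}{3}$.
   Context: For $k\in\mathbb{N}$, $\mathcal{H}(k)$ is the family of graphs $H$ for which (i) there is a weight function $\omega:E(H)\to\{3,4,5\}$ such that $H$ contains no cycle $C$ whose weight $\omega(C)=\sum_{e\in E(C)}\omega(e)$ is odd and smaller than $2k+1$, and (ii) there is a spanning tree $T$ of $H$ all of whose edges have weight $3$. For a vertex set (or subgraph) $B$, $N^1[B]$ is the closed (unweighted) neighbourhood of $V(B)$: all vertices at graph distance at most $1$ from some vertex of $B$. *)

(* Defs.v *)
From mathcomp Require Import all_boot.
Set Implicit Arguments. Unset Strict Implicit. Unset Printing Implicit Defensive.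

Definition simple_graph (T : finType) (e : rel T) : Prop :=
  symmetric e /\ irreflexive e.

Definition is_cycle (T : finType) (e : rel T) (s : seq T) : Prop :=
  [/\ 3 <= size s, uniq s & cycle e s].

Definition cycle_weight (T : finType) (w : T -> T -> nat) (s : seq T) : nat :=
  \sum_(x <- s) w x (next s x).

(* w is a weight function E(H) -> {3,4,5} (represented as a symmetric
   function on vertex pairs; only values on edges matter). *)
Definition weight_fun (T : finType) (e : rel T) (w : T -> T -> nat) : Prop :=
  (forall x y, w x y = w y x) /\
  (forall x y, e x y -> w x y \in [:: 3; 4; 5]).

Definition no_short_odd_cycle (T : finType) (e : rel T) (w : T -> T -> nat)
  (k : nat) : Prop :=
  forall s, is_cycle e s -> odd (cycle_weight w s) -> 2 * k + 1 <= cycle_weight w s.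

Definition spanning_tree (T : finType) (e t : rel T) : Prop :=
  [/\ symmetric t, subrel t e, (forall x y, connect t x y)
    & (forall s, ~ is_cycle t s)].

Definition weight3_spanning_tree (T : finType) (e : rel T) (w : T -> T -> nat)
  : Prop :=
  exists t : rel T, spanning_tree e t /\ (forall x y, t x y -> w x y = 3).

Definition in_Hk_with (k : nat) (T : finType) (e : rel T) (w : T -> T -> nat)
  : Prop :=
  [/\ simple_graph e, weight_fun e w, no_short_odd_cycle e w k
    & weight3_spanning_tree e w].

Definition closed_nbhd (T : finType) (e : rel T) (B : {set T}) : {set T} :=
  [set v | [exists u in B, (u == v) || e u v]].

(* Main.v *)
Require Import Defs.
From mathcomp Require Import all_boot.
From mathcomp Require Import zify.
Set Implicit Arguments. Unset Strict Implicit. Unset Printing Implicit Defensive.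

Section Main.
Variable T : finType.
Variable e : rel T.
Variable w : T -> T -> nat.
Hypothesis e_sym : symmetric e.
Hypothesis e_irr : irreflexive e.
Hypothesis w_sym : forall x y, w x y = w y x.
Hypothesis w_edge : forall x y, e x y -> w x y \in [:: 3; 4; 5].

Lemma w_ge3 x y : e x y -> 3 <= w x y.
Proof. by move/w_edge; rewrite !inE => /or3P[] /eqP->. Qed.
Lemma w_le5 x y : e x y -> w x y <= 5.
Proof. by move/w_edge; rewrite !inE => /or3P[] /eqP->. Qed.

Local Notation W := (cycle_weight w).

Fixpoint pw (x : T) (l : seq T) : nat :=
  if l is y :: l' then w x y + pw y l' else 0.

Lemma pw_cat x l1 l2 : pw x (l1 ++ l2) = pw x l1 + pw (last x l1) l2.
Proof. by elim: l1 x => [|y l1 IH] x //=; rewrite IH addnA. Qed.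

Lemma pw_rcons x l y : pw x (rcons l y) = pw x l + w (last x l) y.
Proof. by rewrite -cats1 pw_cat /= addn0. Qed.

Lemma sum_next_at y0 y l : uniq (y :: l) ->
  \sum_(z <- y :: l) w z (next_at z y0 y l) = pw y (rcons l y0).
Proof.
elim: l y => [|y' l IH] y /=.
  by rewrite big_seq1 eqxx addn0.
case/andP => yn uy'l.
rewrite big_cons eqxx -IH //.
congr (_ + _); apply: eq_big_seq => z zin.
have: z != y by apply: contraNneq yn => <-.
by move/negbTE ->.
Qed.

Lemma W_cons x l : uniq (x :: l) -> W (x :: l) = pw x (rcons l x).
Proof. by move=> u; rewrite /cycle_weight -sum_next_at. Qed.

Lemma W_rot i s : uniq s -> W (rot i s) = W s.
Proof.
move=> us; have pr : perm_eq (rot i s) s by rewrite perm_rot.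
rewrite /cycle_weight (perm_big s pr) /=.
by apply: eq_bigr => x _; rewrite next_rot.
Qed.

Lemma W_split p p1 q p2 : uniq (p :: p1 ++ q :: p2) ->
  W (p :: p1 ++ q :: p2) = pw p (rcons p1 q) + pw q (rcons p2 p).
Proof.
move=> u; rewrite W_cons // rcons_cat pw_cat /= pw_rcons addnA.
by rewrite pw_rcons.
Qed.

Lemma W_pref p l q : uniq (p :: rcons l q) ->
  W (p :: rcons l q) = pw p (rcons l q) + w q p.
Proof. by move=> u; rewrite W_cons // pw_rcons last_rcons. Qed.

Lemma W_bridge p l q z : uniq (p :: rcons (rcons l q) z) ->
  W (p :: rcons (rcons l q) z) = pw p (rcons l q) + w q z + w z p.
Proof. by move=> u; rewrite W_cons // !pw_rcons !last_rcons. Qed.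


Lemma path_frel_mem (f : T -> T) x l z :
  path (frel f) x l -> z \in belast x l -> f z \in l.
Proof.
elim: l x => [|y l IH] x //=.
case/andP=> /eqP fx pl; rewrite inE => /orP[/eqP ->|zb].
  by rewrite fx mem_head.
by rewrite inE (IH y pl zb) orbT.
Qed.

Lemma next_split_l r (p : T) p1 q p2 z : r = p :: p1 ++ q :: p2 ->
  uniq r -> z \in p :: p1 -> next r z \in rcons p1 q.
Proof.
move=> Er ur zin; have := cycle_next ur; rewrite {2}Er /= rcons_cat /= -cat_rcons.
rewrite cat_path => /andP[pa _]; apply: path_frel_mem pa _.
by rewrite belast_rcons.
Qed.

Lemma next_split_r r (p : T) p1 q p2 z : r = p :: p1 ++ q :: p2 ->
  uniq r -> z \in q :: p2 -> next r z \in rcons p2 p.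
Proof.
move=> Er ur zin; have := cycle_next ur; rewrite {2}Er /= rcons_cat /= -cat_rcons.
rewrite cat_path last_rcons => /andP[_ pa]; apply: path_frel_mem pa _.
by rewrite belast_rcons.
Qed.

Lemma rot_swap (p : T) p1 q p2 :
  rot (size p1).+1 (p :: p1 ++ q :: p2) = q :: p2 ++ p :: p1.
Proof. by rewrite -[(size p1).+1]/(size (p :: p1)) -cat_cons rot_size_cat. Qed.

Lemma pref_cycle (p : T) p1 q p2 (r := p :: p1 ++ q :: p2) :
  uniq r -> cycle e r -> e q p -> p1 != [::] ->
  [/\ is_cycle e (p :: rcons p1 q), {subset p :: rcons p1 q <= r}
    & size (p :: rcons p1 q) = (size p1).+2].
Proof.
move=> ur cr eqp p1n; have sz : size (p :: rcons p1 q) = (size p1).+2 by rewrite /= size_rcons.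
have sub : {subset p :: rcons p1 q <= r}.
  by move=> x; rewrite /r /= !inE mem_rcons inE mem_cat inE => /or3P[->|->|->]; rewrite ?orbT.
split => //; split.
- by rewrite sz !ltnS lt0n size_eq0.
- move: ur; rewrite /r -cat_cons -cat_rcons => /= /andP[pn]; rewrite cat_uniq => /and3P[u1 _ _].
  rewrite /= u1 andbT; apply: contra pn; rewrite mem_cat => ->.
  by [].
- move: cr; rewrite /r /= rcons_cat /= -cat_rcons cat_path => /andP[pa _].
  by rewrite rcons_path pa last_rcons.
Qed.

Lemma pref_uniq (p : T) p1 q p2 : uniq (p :: p1 ++ q :: p2) -> uniq (p :: rcons p1 q).
Proof.
rewrite -cat_cons -cat_rcons cat_uniq => /and3P[u1 _ _].
by [].
Qed.

Lemma pref_path (p : T) p1 q p2 : cycle e (p :: p1 ++ q :: p2) -> path e p (rcons p1 q).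
Proof. by rewrite /= rcons_cat /= -cat_rcons cat_path => /andP[]. Qed.

Lemma pref_mem (p : T) p1 q p2 x : x \in p :: rcons p1 q -> x \in p :: p1 ++ q :: p2.
Proof. by rewrite !inE mem_rcons inE mem_cat inE => /or3P[->|->|->]; rewrite ?orbT. Qed.

Lemma bridge_cycle (p : T) p1 q p2 z :
  uniq (p :: p1 ++ q :: p2) -> cycle e (p :: p1 ++ q :: p2) -> z \notin p :: p1 ++ q :: p2 ->
  e q z -> e z p ->
  is_cycle e (p :: rcons (rcons p1 q) z).
Proof.
move=> ur cr zn eqz ezp; split.
- by rewrite /= !size_rcons.
- rewrite -cats1 -cat_cons cat_uniq (pref_uniq ur) /= andbT orbF.
  by apply: contra zn => /pref_mem.
- rewrite /= !rcons_path !last_rcons eqz ezp !andbT.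
  by move: (pref_path cr); rewrite rcons_path.
Qed.

Lemma odd_choice a b c : odd (a + b) -> odd (a + c) || odd (b + c).
Proof. by rewrite !oddD; case: (odd a); case: (odd b); case: (odd c). Qed.

Lemma rot_dec (s : seq T) u v : uniq s -> u \in s -> v \in s -> u != v ->
  exists i p1 p2, rot i s = u :: p1 ++ v :: p2.
Proof. by move=> us ui vi uv; case: (rot_to_arc us ui vi uv) => i p1 p2 _ _ E; exists i, p1, p2. Qed.

Lemma chord_reduce s u v : is_cycle e s -> u \in s -> v \in s -> e u v ->
  next s u != v -> next s v != u -> odd (W s) ->
  exists s1, [/\ is_cycle e s1, {subset s1 <= s}, size s1 < size s & odd (W s1)].
Proof.
case=> sz us cs ui vi euv nuv nvu ow.
have uv : u != v by apply: contraTneq euv => ->; rewrite e_irr.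
case: (rot_dec us ui vi uv) => i [p1] [p2] Er.
have ur : uniq (rot i s) by rewrite rot_uniq.
have cr : cycle e (rot i s) by rewrite rot_cycle.
have nr : forall x, next s x = next (rot i s) x by move=> x; rewrite next_rot.
have p1n : p1 != [::].
  apply: contra nuv => /eqP p1e; rewrite nr.
  by have := next_split_l Er ur (mem_head _ _); rewrite p1e /= inE.
have p2n : p2 != [::].
  apply: contra nvu => /eqP p2e; rewrite nr.
  by have := next_split_r Er ur (mem_head _ _); rewrite p2e /= inE.
rewrite Er in ur cr.
have Er' := rot_swap u p1 v p2.
have ur' : uniq (v :: p2 ++ u :: p1) by rewrite -Er' rot_uniq.
have cr' : cycle e (v :: p2 ++ u :: p1) by rewrite -Er' rot_cycle.
have [c1 sub1 sz1] := pref_cycle ur cr (etrans (e_sym v u) euv) p1n.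
have [c2 sub2 sz2] := pref_cycle ur' cr' euv p2n.
have Ws : W s = pw u (rcons p1 v) + pw v (rcons p2 u).
  by rewrite -(W_rot i us) Er W_split.
have szs : size s = size p1 + size p2 + 2.
  by rewrite -(size_rot i) Er /= size_cat /= addnS addn2.
have W1 : W (u :: rcons p1 v) = pw u (rcons p1 v) + w v u.
  by rewrite W_pref //; case: c1.
have W2 : W (v :: rcons p2 u) = pw v (rcons p2 u) + w u v.
  by rewrite W_pref //; case: c2.
have ow2 : odd (pw u (rcons p1 v) + pw v (rcons p2 u)) by rewrite -Ws.
have /orP[o1|o2] := odd_choice (w u v) ow2.
- exists (u :: rcons p1 v); split => //.
  + by move=> x /sub1; rewrite -Er mem_rot.
  + have : 0 < size p2 by rewrite lt0n size_eq0.
    by move=> h; rewrite sz1 szs addn2 !ltnS -{1}(addn0 (size p1)) ltn_add2l.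
  + by rewrite W1 w_sym.
- exists (v :: rcons p2 u); split => //.
  + by move=> x /sub2; rewrite -Er' mem_rot -Er mem_rot.
  + have : 0 < size p1 by rewrite lt0n size_eq0.
    by move=> h; rewrite sz2 szs addn2 !ltnS -{1}(add0n (size p2)) ltn_add2r.
  + by rewrite W2.
Qed.

Definition r3 (S : {set T}) : rel T := fun x y => [&& x \in S, y \in S, e x y & w x y == 3].
Definition comp S x : {set T} := [set z | connect (r3 S) x z].
Definition TR S (s : seq T) : {set {set T}} :=
  [set comp S x | x in [set x in S | comp S x \subset [set z in s]]].

Lemma r3_sym S : symmetric (r3 S).
Proof. by move=> x y; rewrite /r3 e_sym w_sym andbCA [(y \in S) && _]andbC. Qed.

Lemma r3_connect_sym S : connect_sym (r3 S).
Proof. exact: sym_connect_sym (@r3_sym S). Qed.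

Lemma comp_eq S x y : connect (r3 S) x y -> comp S x = comp S y.
Proof.
move=> cxy; apply/setP => v; rewrite !inE; apply/idP/idP => h.
  by apply: connect_trans h; rewrite r3_connect_sym.
exact: connect_trans cxy h.
Qed.

Lemma connect_ind_pred (r : rel T) (P : T -> Prop) x :
  P x -> (forall u v, P u -> r u v -> P v) -> forall y, connect r x y -> P y.
Proof.
move=> Px step y /connectP[l pth ->]; elim: l x Px pth => //= v l IH x Px /andP[rxv pth].
exact: IH (step _ _ Px rxv) pth.
Qed.

Lemma TR_sub S (s1 s2 : seq T) : {subset s1 <= s2} -> TR S s1 \subset TR S s2.
Proof.
move=> sub; apply: imsetS; apply/subsetP => x; rewrite !inE => /andP[-> /subsetP h].
by apply/subsetP => v /h; rewrite !inE => /sub.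
Qed.


Lemma mem_s' (p : T) p1 q z x :
  (x \in p :: rcons (rcons p1 q) z) = (x == z) || (x \in p :: rcons p1 q).
Proof. by rewrite !inE mem_rcons inE orbCA. Qed.

Lemma pref_mem2 (p1 : seq T) q x : x \in rcons p1 q -> x \in p1 ++ [:: q] .
Proof. by rewrite cats1. Qed.

Lemma bridge_core (S : {set T}) (r : seq T) p p1 q p2 z :
  r = p :: p1 ++ q :: p2 -> uniq r -> cycle e r -> {subset r <= S} ->
  (forall u v, u \in r -> v \in r -> e u v -> next r u = v \/ next r v = u) ->
  z \in S -> z \notin r -> r3 S z p -> r3 S z q -> p2 != [::] ->
  odd (pw p (rcons p1 q)) ->
  exists (S' : {set T}) (s' : seq T), [/\ #|S'| < #|S|, S' \subset S, is_cycle e s', {subset s' <= S'}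
     & odd (W s') /\ #|TR S' s'| <= #|TR S r|.+1].
Proof.
move=> Er ur cr rS chl zS zr r3p r3q p2n oa.
have ur0 := ur; rewrite Er in ur0.
have cr0 := cr; rewrite Er in cr0.
have zr0 := zr; rewrite Er in zr0.
move: (r3p) (r3q); rewrite /r3 => /and4P[_ pS ezp /eqP wzp] /and4P[_ qS ezq /eqP wzq].
have disj : forall x, x \in p :: rcons p1 q -> x \notin p2.
  move: ur0; rewrite -cat_cons -cat_rcons cat_uniq => /and3P[_ /hasPn h _] x xin.
  by apply/negP => xp2; move: (h x xp2); rewrite xin.
set S' := S :\: [set x in p2].
set s' := p :: rcons (rcons p1 q) z.
have S'S : S' \subset S by apply: subsetDl.
have s'S' : {subset s' <= S'}.
  move=> x; rewrite mem_s' => /orP[/eqP ->|xin].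
    rewrite !inE zS andbT; apply: contra zr => zp2.
    by rewrite Er !inE mem_cat !inE zp2 !orbT.
  rewrite !inE (disj x xin) /=; apply: rS; rewrite Er; exact: pref_mem xin.
exists S', s'; split => //.
- apply: proper_card; apply/properP; split => //.
  have [x0 x0in] : exists x0, x0 \in p2 by case: (p2) p2n => // x l _; exists x; rewrite mem_head.
  exists x0; first by apply: rS; rewrite Er !inE mem_cat !inE x0in !orbT.
  by rewrite !inE x0in.
- by apply: bridge_cycle ur0 cr0 zr0 _ ezp; rewrite e_sym.
- split.
  + rewrite W_bridge; last by case: (bridge_cycle ur0 cr0 zr0 (etrans (e_sym _ _) ezq) ezp).
    by rewrite (w_sym q z) wzq wzp -addnA oddD oa.
  + have key : TR S' s' \subset comp S' z |: TR S r.
      apply/subsetP => K /imsetP[x]; rewrite inE => /andP[xS' /subsetP csub] ->.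
      case: (boolP (z \in comp S' x)) => zc.
        rewrite in_setU1 (comp_eq (_ : connect (r3 S') x z)) ?eqxx //.
        by move: zc; rewrite inE.
      have inpre : forall v, v \in comp S' x -> v \in p :: rcons p1 q.
        move=> v vc; have := csub v vc; rewrite inE mem_s' => /orP[/eqP vz|//].
        by move: zc; rewrite -vz vc.
      have ceq : comp S' x = comp S x.
        apply/setP => v; rewrite !inE; apply/idP/idP.
          apply: connect_sub => a b hab; apply: connect1; move: hab.
          rewrite /r3 => /and4P[aS' bS' -> ->].
          by rewrite (subsetP S'S _ aS') (subsetP S'S _ bS').
        move=> cv; have : v \in comp S' x; last by rewrite inE.
        apply: (connect_ind_pred (r := r3 S) (P := fun v => v \in comp S' x)) cv.
          by rewrite inE connect0.
        move=> u v' uc; rewrite /r3 => /and4P[uS v'S euv /eqP wuv].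
        have uS' : u \in S' by apply: s'S'; move: (csub u uc); rewrite inE.
        have upre := inpre u uc.
        have ur' : u \in r by rewrite Er; apply: pref_mem upre.
        case v'S' : (v' \in S').
          rewrite inE; apply: connect_trans (_ : connect (r3 S') x u) _.
            by move: uc; rewrite inE.
          by apply: connect1; rewrite /r3 uS' v'S' euv wuv eqxx.
        have v'p2 : v' \in p2 by move: v'S'; rewrite !inE v'S andbT => /negbFE.
        have v'r : v' \in r by rewrite Er !inE mem_cat !inE v'p2 !orbT.
        have upq : (u == p) || (u == q).
          have [h|h] := chl u v' ur' v'r euv.
            move: upre; rewrite -cats1 -cat_cons mem_cat => /orP[ul|]; last by rewrite inE => ->; rewrite orbT.
            have := next_split_l Er ur ul; rewrite h => v'in.
            have v'pre : v' \in p :: rcons p1 q by rewrite inE v'in orbT.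
            by move: (disj v' v'pre); rewrite v'p2.
          have v'q : v' \in q :: p2 by rewrite inE v'p2 orbT.
          have := next_split_r Er ur v'q; rewrite h mem_rcons inE => /orP[->//|up2].
          by move: (disj u upre); rewrite up2.
        have zS' : z \in S' by apply: s'S'; rewrite mem_s' eqxx.
        have r3uz : r3 S' u z.
          rewrite /r3 uS' zS' /=; case/orP: upq => /eqP ->.
            by rewrite e_sym ezp w_sym wzp.
          by rewrite e_sym ezq w_sym wzq.
        have : z \in comp S' x.
          rewrite inE; apply: connect_trans (_ : connect (r3 S') x u) (connect1 r3uz).
          by move: uc; rewrite inE.
        by rewrite (negbTE zc).
      rewrite in_setU1 ceq; apply/orP; right; apply: imset_f.
      rewrite inE (subsetP S'S _ xS') /=; apply/subsetP => v; rewrite -ceq => /inpre vin.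
      by rewrite inE Er; apply: pref_mem vin.
    apply: leq_trans (subset_leq_card key) _.
    by rewrite cardsU1; case: (_ \notin _).
Qed.

Definition adj4 (s : seq T) p q :=
  ((next s p == q) && (w p q == 4)) || ((next s q == p) && (w q p == 4)).

Lemma TR_eq S (s1 s2 : seq T) : s1 =i s2 -> TR S s1 = TR S s2.
Proof.
by move=> h; apply/eqP; rewrite eqEsubset !TR_sub // => x; rewrite h.
Qed.

Lemma even4 x y : e x y -> ~~ odd (w x y) -> w x y = 4.
Proof. by move/w_edge; rewrite !inE => /or3P[] /eqP ->. Qed.

Lemma bridge_reduce (S : {set T}) (s : seq T) y p q :
  is_cycle e s -> {subset s <= S} -> odd (W s) ->
  (forall u v, u \in s -> v \in s -> e u v -> next s u = v \/ next s v = u) ->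
  y \in S -> y \notin s -> p \in s -> q \in s -> p != q ->
  r3 S y p -> r3 S y q -> ~~ adj4 s p q ->
  exists (S' : {set T}) (s' : seq T), [/\ #|S'| < #|S|, S' \subset S, is_cycle e s', {subset s' <= S'}
     & odd (W s') /\ #|TR S' s'| <= #|TR S s|.+1].
Proof.
case=> sz us cs sS ow chl yS ys pin qin pq r3p r3q nadj.
case: (rot_dec us pin qin pq) => i [p1] [p2] Er.
set r := rot i s in Er.
have ur : uniq r by rewrite rot_uniq.
have cr : cycle e r by rewrite rot_cycle.
have nr : forall x, next r x = next s x by move=> x; rewrite next_rot.
have mr : r =i s by move=> x; rewrite mem_rot.
have rS : {subset r <= S} by move=> x; rewrite mr; apply: sS.
have chlr : forall u v, u \in r -> v \in r -> e u v -> next r u = v \/ next r v = u.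
  by move=> u v; rewrite !mr !nr; apply: chl.
have yr : y \notin r by rewrite mr.
have TRr : TR S r = TR S s by apply: TR_eq.
have ur0 := ur; rewrite Er in ur0.
have Ws : W s = pw p (rcons p1 q) + pw q (rcons p2 p) by rewrite -(W_rot i us) -/r Er W_split.
case oa : (odd (pw p (rcons p1 q))).
- have p2n : p2 != [::].
    apply: contra nadj => /eqP p2e; apply/orP; right.
    have nq : next r q = p.
      by have := next_split_r Er ur (mem_head _ _); rewrite p2e /= inE => /eqP.
    rewrite -nr nq eqxx /=; apply/eqP/even4.
      by rewrite -nq (next_cycle cr) // Er !inE mem_cat !inE eqxx !orbT.
    by move: ow; rewrite Ws p2e /= addn0 oddD oa.
  have [S' [s' [h1 h2 h3 h4 h5]]] := bridge_core Er ur cr rS chlr yS yr r3p r3q p2n oa.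
  by exists S', s'; split => //; rewrite -TRr.
- have p1n : p1 != [::].
    apply: contra nadj => /eqP p1e; apply/orP; left.
    have np : next r p = q.
      by have := next_split_l Er ur (mem_head _ _); rewrite p1e /= inE => /eqP.
    rewrite -nr np eqxx /=; apply/eqP/even4.
      by rewrite -np (next_cycle cr) // Er mem_head.
    by move: oa; rewrite p1e /= addn0 => ->.
  have ob : odd (pw q (rcons p2 p)) by move: ow; rewrite Ws oddD oa.
  have Er' : rot (size p1).+1 r = q :: p2 ++ p :: p1 by rewrite Er rot_swap.
  set r' := rot (size p1).+1 r in Er'.
  have ur' : uniq r' by rewrite rot_uniq.
  have cr' : cycle e r' by rewrite rot_cycle.
  have mr' : r' =i s by move=> x; rewrite mem_rot mr.
  have nr' : forall x, next r' x = next s x by move=> x; rewrite next_rot // nr.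
  have rS' : {subset r' <= S} by move=> x; rewrite mr'; apply: sS.
  have chlr' : forall u v, u \in r' -> v \in r' -> e u v -> next r' u = v \/ next r' v = u.
    by move=> u v; rewrite !mr' !nr'; apply: chl.
  have yr' : y \notin r' by rewrite mr'.
  have [S' [s' [h1 h2 h3 h4 h5]]] := bridge_core Er' ur' cr' rS' chlr' yS yr' r3q r3p p1n ob.
  by exists S', s'; split => //; rewrite -(TR_eq S mr').
Qed.

Lemma next_head (x : T) l : next (x :: l) x = head x l.
Proof. by case: l => [|y l]; rewrite /next /= eqxx. Qed.

Lemma next_2nd (x y : T) l : y != x -> next (x :: y :: l) y = head x l.
Proof. by move=> yx; case: l => [|u l]; rewrite /next /= (negbTE yx) eqxx. Qed.

Lemma next_3rd (x y z : T) l : z != x -> z != y -> next (x :: y :: z :: l) z = head x l.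
Proof. by move=> zx zy; case: l => [|u l]; rewrite /next /= (negbTE zx) (negbTE zy) eqxx. Qed.

Section Acc.
Variables (S : {set T}) (s : seq T).
Hypothesis cyc_s : is_cycle e s.
Hypothesis sS : {subset s <= S}.
Hypothesis ow : odd (W s).
Hypothesis chl : forall u v, u \in s -> v \in s -> e u v -> next s u = v \/ next s v = u.
Hypothesis brg : forall y p q, y \in S -> y \notin s -> p \in s -> q \in s -> p != q ->
  r3 S y p -> r3 S y q -> adj4 s p q.

Local Notation nx := (next s).

Lemma us : uniq s. Proof. by case: cyc_s. Qed.
Lemma cs : cycle e s. Proof. by case: cyc_s. Qed.
Lemma szs : 3 <= size s. Proof. by case: cyc_s. Qed.

Lemma e_nx a : a \in s -> e a (nx a).
Proof. by move=> ain; apply: next_cycle cs ain. Qed.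

Lemma nx_inj : injective nx.
Proof. exact: can_inj (prev_next us). Qed.

Lemma cyc3 x y z : x \in s -> x != y -> x != z -> y != z ->
  nx x = y -> nx y = z -> nx z = x -> w x y = 4 -> w y z = 4 -> w z x = 4 -> False.
Proof.
move=> xin xy xz yz nxy nyz nzx w1 w2 w3.
case: (rot_to xin) => i l Er.
have nr : forall a, next (x :: l) a = nx a by move=> a; rewrite -Er next_rot // us.
have ur : uniq (x :: l) by rewrite -Er rot_uniq us.
case: l Er nr ur => [|y' l] Er nr ur.
  by move: (nr x); rewrite next_head nxy /= => h; rewrite h eqxx in xy.
have yy : y' = y by move: (nr x); rewrite next_head nxy.
subst y'.
case: l Er nr ur => [|z' l] Er nr ur.
  by move: (nr y); rewrite next_2nd 1?eq_sym // nyz /= => h; rewrite h eqxx in xz.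
have zz : z' = z by move: (nr y); rewrite next_2nd 1?eq_sym // nyz.
subst z'.
case: l Er nr ur => [|u l] Er nr ur.
  have : W s = 12.
    rewrite -(W_rot i us) Er W_cons //= addn0 w1 w2 w3 //.
  by move=> Ws; move: ow; rewrite Ws.
move: (nr z); rewrite next_3rd 1?eq_sym // 1?eq_sym // nzx /= => ux.
by move: ur; rewrite /= ux !inE eqxx !orbT.
Qed.

Lemma adjP a b : adj4 s a b -> (nx a = b /\ w a b = 4) \/ (nx b = a /\ w b a = 4).
Proof. by case/orP => /andP[/eqP -> /eqP ->]; [left|right]. Qed.

Lemma three_adj x y z : x \in s -> x != y -> x != z -> y != z ->
  adj4 s x y -> adj4 s y z -> adj4 s x z -> False.
Proof.
move=> xin xy xz yz /adjP[[nxy wxy]|[nyx wyx]].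
  move=> /adjP[[nyz wyz]|[nzy wzy]] /adjP[[nxz wxz]|[nzx wzx]].
  - by rewrite -nxy -nxz eqxx in yz.
  - exact: (cyc3 xin xy xz yz nxy nyz nzx wxy wyz wzx).
  - by rewrite -nxy -nxz eqxx in yz.
  - by rewrite -nzx -nzy eqxx in xy.
move=> /adjP[[nyz wyz]|[nzy wzy]] /adjP[[nxz wxz]|[nzx wzx]].
- by rewrite -nyx -nyz eqxx in xz.
- by rewrite -nyx -nyz eqxx in xz.
- by apply: (cyc3 xin xz xy _ nxz nzy nyx wxz wzy wyx); rewrite eq_sym.
- by rewrite -nzx -nzy eqxx in xy.
Qed.


Definition cst a := w a (nx a) - 3.
Definition rD : rel T := fun b b' =>
  [&& b \in s, b' \in s & ((nx b == b') && (w b b' == 3)) || ((nx b' == b) && (w b' b == 3))].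
Definition endp a := (a \in s) && (w a (nx a) != 3).
Definition attp a y := [exists b, [&& y \in S, y \notin s, connect rD a b & r3 S b y]].
Definition att a := [exists y, attp a y].
Definition payer a := odflt a [pick y | attp a y].

Lemma rD_sym : symmetric rD.
Proof. by move=> x y; rewrite /rD; case: (x \in s); case: (y \in s) => //=; rewrite orbC. Qed.

Lemma conn_rD_in a b : a \in s -> connect rD a b -> b \in s.
Proof.
move=> ain; apply: (connect_ind_pred (P := fun b => b \in s)) => // u v _.
by case/and3P.
Qed.

Lemma r3_rD u v : u \in s -> v \in s -> r3 S u v -> rD u v.
Proof.
move=> uin vin /and4P[_ _ euv /eqP wuv]; rewrite /rD uin vin /=.
case: (chl uin vin euv) => [->|->]; rewrite eqxx ?wuv //.
by rewrite w_sym wuv orbT.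
Qed.

Lemma uniq_end a a' : endp a -> endp a' -> connect rD a a' -> a = a'.
Proof.
move=> /andP[ain ea] /andP[a'in ea'] ca.
pose P b := exists j, iter j nx b = a /\ forall i, i < j -> w (iter i nx b) (nx (iter i nx b)) = 3.
have : P a'.
  apply: (connect_ind_pred (P := P)) ca; first by exists 0; split => // i.
  move=> u v [j [ij hj]] /and3P[_ _ /orP[/andP[/eqP nuv /eqP wuv]|/andP[/eqP nvu /eqP wvu]]].
    case: j ij hj => [|j] ij hj.
      by move: ea; rewrite -ij /= nuv wuv.
    exists j; split; first by rewrite -nuv -iterSr.
    by move=> i ltij; rewrite -nuv -iterSr; apply: hj.
  exists j.+1; split; first by rewrite iterSr nvu.
  case=> [|i] lti; first by rewrite /= nvu.
  by rewrite iterSr nvu; apply: hj.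
case=> [[|j] [ij hj]]; first by [].
by move: ea'; rewrite (hj 0 (ltn0Sn _)) eqxx.
Qed.

Lemma exit_lem a : a \in s -> ~~ att a -> forall z, connect (r3 S) a z -> (z \in s) && connect rD a z.
Proof.
move=> ain na; apply: (connect_ind_pred (P := fun z => (z \in s) && connect rD a z)).
  by rewrite ain connect0.
move=> u v /andP[uin cu] r3uv.
case vin : (v \in s).
  by rewrite /=; apply: connect_trans cu (connect1 (r3_rD uin vin r3uv)).
case/negP: na; apply/existsP; exists v; apply/existsP; exists u.
move: (r3uv) => /and4P[_ vS _ _].
by rewrite vS vin cu r3uv.
Qed.

Lemma payer_spec a : att a -> attp a (payer a).
Proof.
move=> /existsP[y hy]; rewrite /payer; case: pickP => [y' hy'|h] //=.
by move: (h y); rewrite hy.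
Qed.

Lemma payer_in a : att a -> payer a \in S :\: [set z in s].
Proof.
move/payer_spec => /existsP[b /and4P[yS yn _ _]].
by rewrite !inE yS yn.
Qed.

Lemma cst_le2 a : a \in s -> cst a <= 2.
Proof. by move=> ain; rewrite /cst leq_subLR; apply: w_le5 (e_nx ain). Qed.

Lemma cst_end a : ~~ endp a -> a \in s -> cst a = 0.
Proof. by move=> ne ain; move: ne; rewrite /endp ain /= negbK => /eqP h; rewrite /cst h. Qed.

Lemma trouble : #|[set a | endp a && ~~ att a]| <= #|TR S s|.
Proof.
set TE := [set a | endp a && ~~ att a].
have inj : {in TE &, injective (comp S)}.
  move=> a1 a2; rewrite !inE => /andP[e1 n1] /andP[e2 n2] ceq.
  have : a2 \in comp S a1 by rewrite ceq inE connect0.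
  rewrite inE => /(exit_lem (proj1 (andP e1)) n1) /andP[_ c12].
  exact: uniq_end e1 e2 c12.
rewrite -(card_in_imset inj); apply: subset_leq_card.
apply/subsetP => K /imsetP[a]; rewrite inE => /andP[ea na] ->.
apply: imset_f; rewrite inE; move: (ea) => /andP[ain _].
rewrite (sS ain) /=; apply/subsetP => z; rewrite !inE => /(exit_lem ain na).
by case/andP.
Qed.


Section Bucket.
Variable y : T.
Let B := [set a | (((a \in s) && att a) && (payer a == y)) && endp a].

Lemma Bw a : a \in B -> [/\ y \in S, y \notin s & exists2 b, connect rD a b & r3 S b y].
Proof.
rewrite inE => /andP[/andP[/andP[_ at_a] /eqP pa] _].
move: (payer_spec at_a); rewrite pa => /existsP[b /and4P[yS yn cb r3b]].
by split => //; exists b.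
Qed.

Lemma Bend a : a \in B -> endp a.
Proof. by rewrite inE => /andP[]. Qed.

Lemma Bin a : a \in B -> a \in s.
Proof. by move/Bend/andP => []. Qed.

Lemma Bdist a1 a2 b1 b2 : a1 \in B -> a2 \in B -> a1 != a2 ->
  connect rD a1 b1 -> connect rD a2 b2 -> b1 != b2.
Proof.
move=> a1B a2B a12 c1 c2; apply: contra a12 => /eqP eb; subst b2; apply/eqP.
apply: uniq_end (Bend a1B) (Bend a2B) _.
by apply: connect_trans c1 _; rewrite (sym_connect_sym rD_sym).
Qed.

Lemma Badj a1 a2 b1 b2 : a1 \in B -> a2 \in B -> a1 != a2 ->
  connect rD a1 b1 -> r3 S b1 y -> connect rD a2 b2 -> r3 S b2 y -> adj4 s b1 b2.
Proof.
move=> a1B a2B a12 c1 r1 c2 r2; have [yS yn _] := Bw a1B.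
apply: brg yS yn _ _ (Bdist a1B a2B a12 c1 c2) _ _.
- exact: conn_rD_in (Bin a1B) c1.
- exact: conn_rD_in (Bin a2B) c2.
- by rewrite r3_sym.
- by rewrite r3_sym.
Qed.

Lemma Bpair a1 a2 : a1 \in B -> a2 \in B -> a1 != a2 -> (cst a1 == 1) || (cst a2 == 1).
Proof.
move=> a1B a2B a12; have [_ _ [b1 c1 r1]] := Bw a1B; have [_ _ [b2 c2 r2]] := Bw a2B.
case/adjP: (Badj a1B a2B a12 c1 r1 c2 r2) => [[n12 w12]|[n21 w21]].
  have eb : endp b1 by rewrite /endp (conn_rD_in (Bin a1B) c1) n12 w12.
  by rewrite (uniq_end (Bend a1B) eb c1) /cst n12 w12.
have eb : endp b2 by rewrite /endp (conn_rD_in (Bin a2B) c2) n21 w21.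
by rewrite (uniq_end (Bend a2B) eb c2) /cst n21 w21 orbT.
Qed.

Lemma Btriple a1 a2 a3 : a1 \in B -> a2 \in B -> a3 \in B ->
  a1 != a2 -> a1 != a3 -> a2 != a3 -> False.
Proof.
move=> a1B a2B a3B a12 a13 a23.
have [_ _ [b1 c1 r1]] := Bw a1B; have [_ _ [b2 c2 r2]] := Bw a2B; have [_ _ [b3 c3 r3]] := Bw a3B.
apply: (three_adj (conn_rD_in (Bin a1B) c1) (Bdist a1B a2B a12 c1 c2) (Bdist a1B a3B a13 c1 c3)
  (Bdist a2B a3B a23 c2 c3)).
- exact: Badj a1B a2B a12 c1 r1 c2 r2.
- exact: Badj a2B a3B a23 c2 r2 c3 r3.
- exact: Badj a1B a3B a13 c1 r1 c3 r3.
Qed.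

Lemma bucket : \sum_(a | ((a \in s) && att a) && (payer a == y)) cst a <= 3.
Proof.
rewrite (bigID endp) /= [X in _ + X]big1 ?addn0; last first.
  by move=> a /andP[/andP[/andP[ain _] _] ne]; apply: cst_end.
have -> : \sum_(a | (((a \in s) && att a) && (payer a == y)) && endp a) cst a = \sum_(a in B) cst a.
  by apply: eq_bigl => a; rewrite inE.
case: (set_0Vmem B) => [->|[a1 a1B]]; first by rewrite big_set0.
case: (boolP [exists a2, (a2 \in B) && (a2 != a1)]) => [/existsP[a2 /andP[a2B a21]]|none].
  have BE : B = [set a1; a2].
    apply/setP => a; rewrite in_setU1 in_set1; apply/idP/idP; last first.
      by case/orP => /eqP ->.
    move=> aB; case: (eqVneq a a1) => [//|aa1] /=.
    case: (eqVneq a a2) => [//|aa2].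
    by case: (Btriple a1B a2B aB); rewrite 1?eq_sym.
  rewrite BE big_setU1 /=; last by rewrite inE eq_sym.
  rewrite big_set1.
  have a12 : a1 != a2 by rewrite eq_sym.
  have /orP[/eqP->|/eqP->] := Bpair a1B a2B a12.
    by rewrite add1n ltnS cst_le2 // Bin.
  by rewrite addn1 ltnS cst_le2 // Bin.
have BE : B = [set a1].
  apply/setP => a; rewrite in_set1; apply/idP/idP => [aB|/eqP -> //].
  by apply: contraNT none => aa1; apply/existsP; exists a; rewrite aB.
by rewrite BE big_set1 (leq_trans (cst_le2 (Bin a1B))).
Qed.

End Bucket.

Lemma arith_fin n a t A Bv Wv : Wv = 3 * n + (A + Bv) -> A <= a * 3 -> Bv <= t * 2 ->
  Wv <= 3 * (n + a + t).
Proof. move=> -> h1 h2; lia. Qed.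

Lemma acc_bound : W s <= 3 * (#|S| + #|TR S s|).
Proof.
have Wc : W s = 3 * size s + \sum_(a in s) cst a.
  rewrite -big_uniq ?us // /cycle_weight.
  rewrite (eq_big_seq (fun a => 3 + cst a)); last first.
    by move=> a ain; rewrite /cst subnKC // w_ge3 // e_nx.
  by rewrite big_split /= big_const_seq count_predT iter_addn_0 mulnC.
rewrite (bigID att) /= in Wc.
have hA : \sum_(i in s | att i) cst i <= #|S :\: [set z in s]| * 3.
  rewrite (partition_big payer (mem (S :\: [set z in s]))) /=; last first.
    by move=> a /andP[_ /payer_in].
  rewrite -sum_nat_const; apply: leq_sum => y _; exact: bucket.
have hB : \sum_(i in s | ~~ att i) cst i <= #|TR S s| * 2.
  rewrite (bigID endp) /= [X in _ + X]big1 ?addn0; last first.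
    by move=> a /andP[/andP[ain _] ne]; apply: cst_end.
  apply: leq_trans (_ : \sum_(i | ((i \in s) && ~~ att i) && endp i) 2 <= _).
    by apply: leq_sum => a /andP[/andP[ain _] _]; apply: cst_le2.
  rewrite sum_nat_const leq_mul2r /=; apply: leq_trans trouble.
  apply: subset_leq_card; apply/subsetP => a; rewrite !inE.
  by case/andP => /andP[_ ->] ->.
have card_s : #|S| = size s + #|S :\: [set z in s]|.
  rewrite -(cardsID [set z in s] S); congr (_ + _).
  have /setIidPr -> : [set z in s] \subset S by apply/subsetP => z; rewrite inE; apply: sS.
  by rewrite cardsE; apply/card_uniqP; apply: us.
rewrite card_s; exact: arith_fin Wc hA hB.
Qed.
End Acc.

Lemma LC n : forall (S : {set T}) (s : seq T) t, #|S| < n -> is_cycle e s ->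
  {subset s <= S} -> odd (W s) -> #|TR S s| <= t ->
  exists s', [/\ is_cycle e s', {subset s' <= S}, odd (W s') & W s' <= 3 * (#|S| + t)].
Proof.
elim: n => [|n IHn] S //.
move=> s0 t0 ltS.
suff H : forall m s t, size s < m -> is_cycle e s -> {subset s <= S} -> odd (W s) ->
    #|TR S s| <= t ->
    exists s', [/\ is_cycle e s', {subset s' <= S}, odd (W s') & W s' <= 3 * (#|S| + t)].
  by apply: H (ltnSn _).
elim=> [|m IHm] s t // lts cys sS ow trt.
case: (boolP [exists u, exists v, [&& u \in s, v \in s, e u v, next s u != v & next s v != u]]).
  move/existsP => [u /existsP [v /and5P[ui vi euv nuv nvu]]].
  have [s1 [c1 sub1 sz1 o1]] := chord_reduce cys ui vi euv nuv nvu ow.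
  apply: (IHm s1 t) => //.
  - exact: leq_trans sz1 lts.
  - by move=> x /sub1; apply: sS.
  - exact: leq_trans (subset_leq_card (TR_sub S sub1)) trt.
move=> nochord.
have chl : forall u v, u \in s -> v \in s -> e u v -> next s u = v \/ next s v = u.
  move=> u v ui vi euv; case: (eqVneq (next s u) v) => [->|nuv]; first by left.
  case: (eqVneq (next s v) u) => [->|nvu]; first by right.
  case/negP: nochord; apply/existsP; exists u; apply/existsP; exists v.
  by rewrite ui vi euv nuv nvu.
case: (boolP [exists y, exists p, exists q, [&& y \in S, y \notin s &
    [&& p \in s, q \in s, p != q & [&& r3 S y p, r3 S y q & ~~ adj4 s p q]]]]).
  move/existsP => [y /existsP [p /existsP [q /and3P[yS yn /and4P[pin qin pq /and3P[r3p r3q nadj]]]]]].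
  have [S' [s' [h1 h2 h3 h4 [h5 h6]]]] := bridge_reduce cys sS ow chl yS yn pin qin pq r3p r3q nadj.
  have [s'' [c'' sub'' o'' w'']] := IHn S' s' t.+1 (leq_trans h1 ltS) h3 h4 h5 (leq_trans h6 (trt : #|TR S s| < t.+1)).
  exists s''; split => //.
    by move=> x /sub''; apply: (subsetP h2).
  apply: leq_trans w'' _; rewrite leq_mul2l /= addnS -addSn leq_add2r.
  exact: h1.
move=> nobr.
have brg : forall y p q, y \in S -> y \notin s -> p \in s -> q \in s -> p != q ->
    r3 S y p -> r3 S y q -> adj4 s p q.
  move=> y p q yS yn pin qin pq r3p r3q; apply: contraNT nobr => nadj.
  apply/existsP; exists y; apply/existsP; exists p; apply/existsP; exists q.
  by rewrite yS yn pin qin pq r3p r3q nadj.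
exists s; split => //.
apply: leq_trans (acc_bound cys sS ow chl brg) _.
by rewrite leq_mul2l leq_add2l trt orbT.
Qed.

End Main.

Theorem lemma2p5 (k : nat) (T : finType) (e : rel T) (w : T -> T -> nat)
  (C : seq T) :
  8 <= k -> in_Hk_with k e w ->
  is_cycle e C -> odd (cycle_weight w C) ->
  [set x in C] != [set: T] ->
  2 * k + 1 <= 3 * #|closed_nbhd e [set x in C]|.
Proof.
move=> _ [[esym eirr] [wsym wedge] noshort [t [[tsym tsub tconn _] tw3]]] cycC oddC nspan.
set S := closed_nbhd e [set x in C].
have CS : {subset C <= S}.
  by move=> x xin; rewrite /S inE; apply/existsP; exists x; rewrite inE xin eqxx.
have TR0 : #|TR e w S C| <= 0.
  rewrite leqn0 cards_eq0; apply/eqP/setP => K; rewrite inE.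
  apply/negP => /imsetP[x]; rewrite inE => /andP[xS /subsetP csub] _.
  case/negP: nspan; apply/eqP/setP => v; rewrite !inE.
  have : v \in comp e w S x.
    apply: (connect_ind_pred (P := fun v => v \in comp e w S x)) (tconn x v).
      by rewrite inE connect0.
    move=> u v' uc tuv; have uC : u \in C by move: (csub u uc); rewrite inE.
    rewrite inE; apply: connect_trans (_ : connect (r3 e w S) x u) (connect1 _).
      by move: uc; rewrite inE.
    rewrite /r3 (CS _ uC) (tsub _ _ tuv) (tw3 _ _ tuv) eqxx /= andbT.
    rewrite /S /closed_nbhd inE; apply/existsP; exists u.
    by rewrite inE uC (tsub _ _ tuv) orbT.
  by move/csub; rewrite inE.
have [s' [cs' sub' os' ws']] := LC esym eirr wsym wedge (ltnSn #|S|) cycC CS oddC TR0.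
apply: leq_trans (noshort s' cs' os') _.
by move: ws'; rewrite addn0.
Qed.
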